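(* Let $S$ be a simple $(l,r)$-framed algebra, and let $C_S=\{\alpha\in\mathbb{Z}_2^{l+r}:S_{(0,\alpha)}\ne0\}$, $D_S=\{d\in\mathbb{Z}_2^{l+r}:\bigoplus_c S_{(d,c)}\neq 0\}$. Then (1) $C_S$ and $D_S$ are subgroups of $\mathbb{Z}_2^{l+r}$; (2) $|\alpha|\in2\mathbb{Z}$ and $|d|\in 8\mathbb{Z}$ for all $\alpha\in C_S$, $d\in D_S$; (3) $|\alpha d|\in2\mathbb{Z}$ for all $\alpha\in C_S$, $d\in D_S$.
   Context: Let $\mathrm{IS}=\{0,\frac12,\frac1{16}\}$ with fusion rule $\star$ (values are subsets): $0\star h=h\star0=\{h\}$, $\frac12\star\frac12=\{0\}$, $\frac12\star\frac1{16}=\frac1{16}\star\frac12=\{\frac1{16}\}$, $\frac1{16}\star\frac1{16}=\{0,\frac12\}$; $A(h_0,h_1,h_2,h_3)=\{h: h\in h_2\star h_3,\ h_0\in h_1\star h\}$. For $h\in A(h_0,h_1,h_2,h_3)$, $h'\in A(h_0,h_2,h_1,h_3)$ define $B^{h,h'}_{h_0,h_1,h_2,h_3}$: $B_{*,0,*,*}=B_{*,*,0,*}=1$; $B_{*,\frac12,\frac12,*}=-1$; $B_{a,\frac12,\frac1{16},a'}=B_{a,\frac1{16},\frac12,a'}=i$ if $a$ or $a'$ is $\frac12$, else $-i$; $B^{b,b'}_{a,\frac1{16},\frac1{16},a'}=e^{-\pi i/8}\cdot\{1$ if $a,a'\ne\frac1{16},a=a'$; $i$ if $a,a'\neq\frac1{16},a\ne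 a'$; $\frac{1+i}2$ if $a=a'=\frac1{16},b=b'$; $\frac{1-i}2$ if $a=a'=\frac1{16},b\neq b'\}$. $\mathrm{IS}^{(l,r)}=\mathrm{IS}^l\times\mathrm{IS}^r$, $\lambda=(h_1,..,h_l,\bar h_1,..,\bar h_r)$, $s(\lambda)=\sum h_i-\sum\bar h_j$; $\star$, $A$ componentwise; $B^{\lambda,\lambda'}_{\lambda^0,\dots,\lambda^3}=\prod_{i\le l}B^{h_i,h'_i}_{h^0_i,\dots,h^3_i}\prod_{j\le r}\overline{B^{\bar h_j,\bar h'_j}_{\bar h^0_j,\dots,\bar h^3_j}}$. An $(l,r)$-framed algebra: finite-dimensional $\mathrm{IS}^{(l,r)}$-graded $S=\bigoplus S_\lambda$ over $\mathbb{C}$ with bilinear product, nonzero $1\in S_0$, $a\cdot_\lambda b$ the $S_\lambda$-component of $a\cdot b$, satisfying (FA1) $S_\lambda=0$ unless $s(\lambda)\in\mathbb{Z}$; (FA2) $S_0=\mathbb{C}1$, $1$ a two-sided unit; (FA3) $S_{\lambda^1}\cdot S_{\lambda^2}\subset\bigoplus_{\lambda\in\lambda^1\star\lambda^2}S_\lambda$; (FA4) $a_2\cdot_{\lambda^0}(a_1\cdot_{\lambda'}a_3)=\sum_{\lambda\in A(\lambda^0,\lambda^1,\lambda^2,\lambda^3)}B^{\lambda,\lambda'}_{\lambda^0,\lambda^1,\lambda^2,\lambda^3}a_1\cdot_{\lambda^0}(a_2\cdot_\lambda a_3)$ for $a_i\in S_{\lambda^i}$, $\lambda'\in A(\lambda^0,\lambda^2,\lambda^1,\lambda^3)$.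 Ideal: graded subspace $M$ with $S\cdot M\subset M$; simple: only ideals $0$ and $S$. Identify $\mathrm{IS}$ with $\{(d,c)\in\mathbb{Z}_2^2:dc=0\}$ via $0\leftrightarrow(0,0)$, $\frac12\leftrightarrow(0,1)$, $\frac1{16}\leftrightarrow(1,0)$, and componentwise $\mathrm{IS}^{(l,r)}$ with pairs $(d,c)\in(\mathbb{Z}_2^{l+r})^2$ with $dc=0$ (componentwise product); $S_{(d,c)}$ is the corresponding graded piece. For $c\in\mathbb{Z}_2^{l+r}$, $|c|_l$, $|c|_r$ count ones in the first $l$, last $r$ coordinates, and $|c|=|c|_l-|c|_r$. *)

(* Defs.v *)
From HB Require Import structures.
From mathcomp Require Import all_boot all_order all_algebra.
From mathcomp Require Import complex.
From mathcomp Require Import reals.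

Set Implicit Arguments.
Unset Strict Implicit.
Unset Printing Implicit Defensive.
Import Order.TTheory GRing.Theory Num.Theory.
Local Open Scope ring_scope.

Inductive IS := IS0 | IShalf | ISsixteenth.

Definition IS_to_ord (h : IS) : 'I_3 :=
  match h with IS0 => inord 0 | IShalf => inord 1 | ISsixteenth => inord 2 end.
Definition ord_to_IS (i : 'I_3) : IS :=
  match val i with 0 => IS0 | 1 => IShalf | _ => ISsixteenth end.
Lemma IS_ordK : cancel IS_to_ord ord_to_IS.
Proof. by case; rewrite /ord_to_IS /= inordK. Qed.

HB.instance Definition _ := Equality.copy IS (can_type IS_ordK).
HB.instance Definition _ := Choice.copy IS (can_type IS_ordK).
HB.instance Definition _ := Countable.copy IS (can_type IS_ordK).
HB.instance Definition _ := Finite.copy IS (can_type IS_ordK).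

Definition ISval (h : IS) : rat :=
  match h with IS0 => 0 | IShalf => 1 / 2 | ISsixteenth => 1 / 16 end.

(* fusion rule: fus h1 h2 h  <=>  h \in h1 * h2 *)
Definition fus (h1 h2 h : IS) : bool :=
  match h1, h2 with
  | IS0, _ => h == h2
  | _, IS0 => h == h1
  | IShalf, IShalf => h == IS0
  | IShalf, ISsixteenth | ISsixteenth, IShalf => h == ISsixteenth
  | ISsixteenth, ISsixteenth => (h == IS0) || (h == IShalf)
  end.

Section Bcoef.
Variable R : realType.
Local Open Scope complex_scope.

Definition Ci : R[i] := Complex 0 1.
(* e^{-pi i/8} = cos(pi/8) - i sin(pi/8),
   cos(pi/8) = sqrt(2+sqrt 2)/2, sin(pi/8) = sqrt(2-sqrt 2)/2 *)
Definition zeta_m8 : R[i] :=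
  Complex (Num.sqrt (2 + Num.sqrt 2) / 2) (- (Num.sqrt (2 - Num.sqrt 2) / 2)).

Definition Bcoef (h0 h1 h2 h3 h h' : IS) : R[i] :=
  match h1, h2 with
  | IS0, _ | _, IS0 => 1
  | IShalf, IShalf => -1
  | IShalf, ISsixteenth | ISsixteenth, IShalf =>
      if (h0 == IShalf) || (h3 == IShalf) then Ci else - Ci
  | ISsixteenth, ISsixteenth =>
      zeta_m8 *
      (if (h0 != ISsixteenth) && (h3 != ISsixteenth) then
         (if h0 == h3 then 1 else Ci)
       else if (h0 == ISsixteenth) && (h3 == ISsixteenth) then
         (if h == h' then (1 + Ci) / 2 else (1 - Ci) / 2)
       else 0 (* never used: A is empty in this case *))
  end.
End Bcoef.

(* ---------- IS^(l,r): coordinates 0..l-1 are left, l..l+r-1 right ---------- *)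
Definition Lam (l r : nat) := {ffun 'I_(l + r) -> IS}.

Definition is_left (l r : nat) (i : 'I_(l + r)) : bool := (i < l)%N.

Definition lam0 (l r : nat) : Lam l r := [ffun _ => IS0].

Definition sLam (l r : nat) (lam : Lam l r) : rat :=
  \sum_(i < l + r | is_left i) ISval (lam i)
  - \sum_(i < l + r | ~~ is_left i) ISval (lam i).

Definition fusL (l r : nat) (lam1 lam2 lam : Lam l r) : bool :=
  [forall i, fus (lam1 i) (lam2 i) (lam i)].

Definition inA (l r : nat) (l0 l1 l2 l3 lam : Lam l r) : bool :=
  fusL l2 l3 lam && fusL l1 lam l0.

Definition BL (R : realType) (l r : nat) (l0 l1 l2 l3 lam lam' : Lam l r) : R[i] :=
  \prod_(i < l + r)
    (if is_left i then Bcoef R (l0 i) (l1 i) (l2 i) (l3 i) (lam i) (lam' i)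
     else conjc (Bcoef R (l0 i) (l1 i) (l2 i) (l3 i) (lam i) (lam' i))).

(* ---------- (l,r)-framed algebras ----------
   S is a finite-dimensional vector space V over C = R[i], with an internal
   direct-sum decomposition V = (+)_lam S_lam given by a family of projections
   pi lam ('End(V)) with S_lam = image of pi lam; a bilinear product mul;
   a ._lam b = pi lam (mul a b). *)
Section Framed.
Variables (R : realType) (l r : nat) (V : vectType R[i]).
Variables (pi : Lam l r -> 'End(V)) (mul : V -> V -> V) (one : V).

Definition Sg (lam : Lam l r) : {vspace V} := limg (pi lam).

Definition graded_decomposition : Prop :=
  [/\ forall lam v, pi lam (pi lam v) = pi lam v,
      forall lam mu v, lam != mu -> pi lam (pi mu v) = 0
    & forall v, \sum_(lam : Lam l r) pi lam v = v].

Definition bilinear_mul : Prop :=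
  (forall (k : R[i]) x y z, mul (k *: x + y) z = k *: mul x z + mul y z) /\
  (forall (k : R[i]) x y z, mul x (k *: y + z) = k *: mul x y + mul x z).

Definition framed_algebra : Prop :=
  [/\ [/\ graded_decomposition, bilinear_mul,
          one != 0 & one \in Sg (lam0 l r)],
      forall lam, sLam lam \isn't a Num.int -> Sg lam = 0%VS,
      [/\ forall v, v \in Sg (lam0 l r) -> exists k : R[i], v = k *: one,
          forall a, mul one a = a
        & forall a, mul a one = a],
      forall l1 l2 a1 a2 lam, a1 \in Sg l1 -> a2 \in Sg l2 ->
        ~~ fusL l1 l2 lam -> pi lam (mul a1 a2) = 0
    &
      forall l0 l1 l2 l3 lam' a1 a2 a3,
        a1 \in Sg l1 -> a2 \in Sg l2 -> a3 \in Sg l3 -> inA l0 l2 l1 l3 lam' ->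
        pi l0 (mul a2 (pi lam' (mul a1 a3))) =
        \sum_(lam : Lam l r | inA l0 l1 l2 l3 lam)
           BL R l0 l1 l2 l3 lam lam' *: pi l0 (mul a1 (pi lam (mul a2 a3)))].

(* graded subspace: M = (+)_lam (M cap S_lam), i.e. stable under the projections *)
Definition graded_subspace (M : {vspace V}) : Prop :=
  forall lam v, v \in M -> pi lam v \in M.

Definition is_ideal (M : {vspace V}) : Prop :=
  graded_subspace M /\ forall a m, m \in M -> mul a m \in M.

Definition simple_framed : Prop :=
  forall M, is_ideal M -> M = 0%VS \/ M = fullv.

(* ---------- Z_2-labels: lam <-> (d, c) with dc = 0 ---------- *)
Definition lam_of_dc (d c : 'rV['F_2]_(l + r)) : Lam l r :=
  [ffun i => if d 0 i == 1 then ISsixteenth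
             else if c 0 i == 1 then IShalf else IS0].

Definition dc_ok (d c : 'rV['F_2]_(l + r)) : bool :=
  [forall i, d 0 i * c 0 i == 0].

Definition C_S : {set 'rV['F_2]_(l + r)} :=
  [set a | Sg (lam_of_dc 0 a) != 0%VS].

Definition D_S : {set 'rV['F_2]_(l + r)} :=
  [set d | [exists c, dc_ok d c && (Sg (lam_of_dc d c) != 0%VS)]].
End Framed.

Definition wtl (l r : nat) (c : 'rV['F_2]_(l + r)) : nat :=
  #|[set i : 'I_(l + r) | is_left i && (c 0 i == 1)]|.
Definition wtr (l r : nat) (c : 'rV['F_2]_(l + r)) : nat :=
  #|[set i : 'I_(l + r) | ~~ is_left i && (c 0 i == 1)]|.
Definition wt (l r : nat) (c : 'rV['F_2]_(l + r)) : int :=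
  (wtl c)%:Z - (wtr c)%:Z.

Definition cwmul (n : nat) (a b : 'rV['F_2]_n) : 'rV['F_2]_n :=
  \row_i (a 0 i * b 0 i).

Definition is_subgroup (n : nat) (G : {set 'rV['F_2]_n}) : Prop :=
  0 \in G /\ {in G &, forall x y, x - y \in G}.

(* Main.v *)
Require Import Defs.
From HB Require Import structures.
From mathcomp Require Import all_boot all_order all_algebra.
From mathcomp Require Import complex reals.
From mathcomp Require Import ring.
Import Order.TTheory GRing.Theory Num.Theory.
Local Open Scope ring_scope.
Set Implicit Arguments.
Unset Strict Implicit.

Lemma F2cases (x : 'F_2) : x = 0 \/ x = 1.
Proof. case: x => [[|[|n]] //= Hn]; [left|right]; exact/val_inj. Qed.

Definition code (x y : 'F_2) : IS :=
  if x == 1 then ISsixteenth else if y == 1 then IShalf else IS0.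
Definition v16 (h : IS) : int :=
  match h with IS0 => 0 | IShalf => 8 | ISsixteenth => 1 end.
Definition eqIS (a b : IS) : bool :=
  match a, b with IS0, IS0 | IShalf, IShalf | ISsixteenth, ISsixteenth => true | _, _ => false end.
Lemma IS_eqE a b : (a == b) = eqIS a b.
Proof. by case: a; case: b => //=; rewrite ?eqxx //; apply/negbTE/eqP. Qed.
Definition ind (b : bool) : int := if b then 1 else 0.

Lemma coordC (x y : 'F_2) h : fus (code 0 x) (code 0 y) h -> code 0 (x - y) = h.
Proof. by have [->|->] := F2cases x; have [->|->] := F2cases y; case: h; rewrite /fus ?IS_eqE /code /= ?IS_eqE. Qed.

Lemma coordD (x1 y1 x2 y2 : 'F_2) h : fus (code x1 y1) (code x2 y2) h ->
  code (x1 - x2) (if h == IShalf then 1 else 0) = h /\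
  (x1 - x2) * (if h == IShalf then 1 else 0) == 0.
Proof.
by have [->|->] := F2cases x1; have [->|->] := F2cases y1; have [->|->] := F2cases x2;
   have [->|->] := F2cases y2; case: h; rewrite /fus ?IS_eqE /code /= ?IS_eqE.
Qed.

Lemma coord3 (x y z : 'F_2) h : fus (code 0 x) (code y z) h ->
  (16 %| v16 h - v16 (code y z) + v16 (code 0%R x) - 8 * ind (x * y == 1%R))%Z.
Proof.
by have [->|->] := F2cases x; have [->|->] := F2cases y; have [->|->] := F2cases z; case: h; rewrite /fus ?IS_eqE /code /= ?IS_eqE.
Qed.

Lemma coordN (x : 'F_2) : v16 (code 0 x) = 8 * ind (x == 1).
Proof. by have [->|->] := F2cases x. Qed.

Lemma coordDN (x y : 'F_2) : v16 (code x y) = ind (x == 1) + 8 * ind ((x != 1) && (y == 1)).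
Proof. by have [->|->] := F2cases x; have [->|->] := F2cases y. Qed.

Section Comb.
Variables (l r : nat).

Definition sgn (i : 'I_(l + r)) : int := if Defs.is_left i then 1 else -1.
Definition NL (lam : Lam l r) : int := \sum_i sgn i * v16 (lam i).

Lemma lam_dcE (d c : 'rV['F_2]_(l + r)) i : lam_of_dc d c i = code (d 0 i) (c 0 i).
Proof. by rewrite ffunE. Qed.

Lemma sLamN lam : 16 * sLam lam = (NL lam)%:~R.
Proof.
rewrite /sLam /NL big_mkcond [X in _ - X]big_mkcond -sumrB mulr_sumr rmorph_sum.
apply: eq_bigr => i _ /=; rewrite /sgn; case: (Defs.is_left i); case: (lam i) => /=;
  by apply/eqP.
Qed.

Lemma card_int (P : pred 'I_(l + r)) :
  (#|[set i | P i]|)%:Z = \sum_i ind (P i).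
Proof.
rewrite -sum1_card (big_morph Posz PoszD (erefl _)) big_mkcond /=.
by apply: eq_bigr => i _; rewrite inE /ind; case: (P i).
Qed.

Lemma wtE (c : 'rV['F_2]_(l + r)) : wt c = \sum_i sgn i * ind (c 0 i == 1).
Proof.
rewrite /wt /wtl /wtr !card_int -sumrB; apply: eq_bigr => i _.
by rewrite /sgn /ind; case: (Defs.is_left i); case: (c 0 i == 1).
Qed.
End Comb.

Section Key.
Variables (R : realType) (l r : nat) (V : vectType R[i]).
Variables (pi : Lam l r -> 'End(V)) (mul : V -> V -> V) (one : V).
Hypothesis HF : framed_algebra pi mul one.
Hypothesis Hsimple : simple_framed pi mul.

Definition mulL (a : V) : V -> V := mul a.
Definition mulR (b : V) : V -> V := mul^~ b.
Lemma mulL_lin a : linear (mulL a).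
Proof. case: HF => [[_ [_ H2] _ _] _ _ _ _] k x y; exact: H2. Qed.
Lemma mulR_lin b : linear (mulR b).
Proof. case: HF => [[_ [H1 _] _ _] _ _ _ _] k x y; exact: H1. Qed.
HB.instance Definition _ a := GRing.isLinear.Build R[i] V V *:%R (mulL a) (mulL_lin a).
HB.instance Definition _ b := GRing.isLinear.Build R[i] V V *:%R (mulR b) (mulR_lin b).

Lemma mulx0 x : mul x 0 = 0.
Proof. exact: (linear0 (mulL x)). Qed.
Lemma mul0x x : mul 0 x = 0.
Proof. exact: (linear0 (mulR x)). Qed.

Lemma pi_id lam v : pi lam (pi lam v) = pi lam v.
Proof. by case: HF => [[[H _ _] _ _ _] _ _ _ _]. Qed.
Lemma pi_ne lam mu v : lam != mu -> pi lam (pi mu v) = 0.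
Proof. by case: HF => [[[_ H _] _ _ _] _ _ _ _]; apply: H. Qed.
Lemma pi_sum v : \sum_(lam : Lam l r) pi lam v = v.
Proof. by case: HF => [[[_ _ H] _ _ _] _ _ _ _]. Qed.

Lemma memSg lam v : v \in Sg pi lam -> pi lam v = v.
Proof. by case/memv_imgP => w _ ->; rewrite pi_id. Qed.
Lemma piSg lam v : pi lam v \in Sg pi lam.
Proof. exact: memv_img (memvf v). Qed.
Lemma pi_other lam mu v : v \in Sg pi mu -> lam != mu -> pi lam v = 0.
Proof. by move=> /memSg <- /pi_ne ->. Qed.

Lemma FA3 l1 l2 a1 a2 lam : a1 \in Sg pi l1 -> a2 \in Sg pi l2 ->
  ~~ fusL l1 l2 lam -> pi lam (mul a1 a2) = 0.
Proof. by case: HF => [_ _ _ H _]; apply: H. Qed.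

Definition Ann (a : V) : {vspace V} :=
  (\bigcap_(mu : Lam l r) lker (linfun (mulL a) \o pi mu))%VS.

Lemma AnnP a m : reflect (forall mu, mul a (pi mu m) = 0) (m \in Ann a).
Proof.
rewrite memvE; apply: (iffP subv_bigcapP) => H mu.
  by have := H mu isT; rewrite -memvE memv_ker comp_lfunE lfunE /= => /eqP.
by move=> _; rewrite -memvE memv_ker comp_lfunE lfunE /= /mulL H.
Qed.

Lemma mulL_sum a I (rs : seq I) (P : pred I) (F : I -> V) :
  mul a (\sum_(i <- rs | P i) F i) = \sum_(i <- rs | P i) mul a (F i).
Proof. exact: (linear_sum (mulL a)). Qed.
Lemma mulR_sum b I (rs : seq I) (P : pred I) (F : I -> V) :
  mul (\sum_(i <- rs | P i) F i) b = \sum_(i <- rs | P i) mul (F i) b.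
Proof. exact: (linear_sum (mulR b)). Qed.

Lemma FA4 l0 l1 l2 l3 lam' a1 a2 a3 :
  a1 \in Sg pi l1 -> a2 \in Sg pi l2 -> a3 \in Sg pi l3 -> inA l0 l2 l1 l3 lam' ->
  pi l0 (mul a2 (pi lam' (mul a1 a3))) =
  \sum_(lam : Lam l r | inA l0 l1 l2 l3 lam)
     BL R l0 l1 l2 l3 lam lam' *: pi l0 (mul a1 (pi lam (mul a2 a3))).
Proof. by case: HF => [_ _ _ _ H]; apply: H. Qed.

Lemma ann_hom a la x nu m ka mu : a \in Sg pi la -> x \in Sg pi nu ->
  m \in Sg pi ka -> mul a m = 0 -> mul a (pi mu (mul x m)) = 0.
Proof.
move=> Ha Hx Hm Ham.
rewrite -[LHS]pi_sum; apply: big1 => l0 _.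
case E: (inA l0 la nu ka mu).
  rewrite (FA4 Hx Ha Hm E) Ham; apply: big1 => lam _.
  by rewrite linear0 mulx0 linear0 scaler0.
move: E; rewrite /inA; case/nandP => [Hf|Hf].
  by rewrite (FA3 Hx Hm Hf) mulx0 linear0.
by rewrite (FA3 Ha (piSg mu _) Hf).
Qed.

Lemma Ann_ideal a la : a \in Sg pi la -> is_ideal pi mul (Ann a).
Proof.
move=> Ha; split.
  move=> lam v /AnnP H; apply/AnnP => mu.
  case: (eqVneq mu lam) => [->|ne]; first by rewrite pi_id H.
  by rewrite pi_ne // mulx0.
move=> x m /AnnP H; apply/AnnP => mu.
rewrite -(pi_sum x) -(pi_sum m) mulR_sum linear_sum mulL_sum.
apply: big1 => nu _.
rewrite mulL_sum linear_sum mulL_sum; apply: big1 => ka _.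
exact: ann_hom Ha (piSg _ _) (piSg _ _) (H ka).
Qed.

Lemma key la lb a b : a \in Sg pi la -> b \in Sg pi lb -> a != 0 -> b != 0 ->
  exists lam, fusL la lb lam && (Sg pi lam != 0%VS).
Proof.
move=> Ha Hb a0 b0.
have Hab : mul a b != 0.
  apply: contraNneq b0 => Hab.
  have HA : Ann a = 0%VS.
    case: (Hsimple (Ann_ideal Ha)) => // Hf.
    have : one \in Ann a by rewrite Hf memvf.
    case: HF => [[_ _ _ H1] _ [_ _ H2] _ _].
    move/AnnP/(_ (lam0 l r)); rewrite memSg // H2 => Ha0.
    by rewrite Ha0 eqxx in a0.
  have : b \in Ann a.
    apply/AnnP => mu; case: (eqVneq mu lb) => [->|ne].
      by rewrite memSg.
    by rewrite (pi_other Hb ne) mulx0.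
  by rewrite HA memv0.
have [lam /= Hl|H0] := pickP [pred lam : Lam l r | pi lam (mul a b) != 0]; last first.
  move: Hab; rewrite -(pi_sum (mul a b)) big1 ?eqxx // => lam _.
  by move: (H0 lam) => /negbFE/eqP.
exists lam; apply/andP; split.
  apply/negPn/negP => Hf; move: Hl; by rewrite (FA3 Ha Hb Hf) eqxx.
apply: contraNneq Hl => HS.
by have := piSg lam (mul a b); rewrite HS memv0.
Qed.

Lemma nz_elt lam : Sg pi lam != 0%VS -> exists2 v, v \in Sg pi lam & v != 0.
Proof. by move=> H; exists (vpick (Sg pi lam)); rewrite ?memv_pick ?vpick0. Qed.
Lemma FA1N lam : Sg pi lam != 0%VS -> (16 %| NL lam)%Z.
Proof.
move=> HS; case: HF => [_ H1 _ _ _].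
have : sLam lam \is a Num.int.
  by apply/negPn/negP => Hn; move: HS; rewrite H1 // eqxx.
case/intrP => m Hm.
have : (NL lam)%:~R = (16 * m)%:~R :> rat by rewrite -sLamN Hm rmorphM.
move/intr_inj => ->; apply: dvdz_mulr; exact: dvdzz.
Qed.
End Key.

Unset Implicit Arguments.

Theorem mainTheorem5 (R : realType) (l r : nat) (V : vectType R[i])
    (pi : Lam l r -> 'End(V)) (mul : V -> V -> V) (one : V) :
  framed_algebra pi mul one -> simple_framed pi mul ->
  [/\ is_subgroup (C_S pi) /\ is_subgroup (D_S pi),
      (forall a, a \in C_S pi -> (2 %| wt a)%Z) /\
      (forall d, d \in D_S pi -> (8 %| wt d)%Z)
    & forall a d, a \in C_S pi -> d \in D_S pi -> (2 %| wt (cwmul a d))%Z].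
Proof.
move=> HF HS.
have C0 : lam_of_dc 0 0 = lam0 l r.
  by apply/ffunP => i; rewrite !ffunE !mxE.
have Sg0 : Sg pi (lam0 l r) != 0%VS.
  case: HF => [[_ _ H1 H2] _ _ _ _]; apply/eqP => H.
  by move: H2; rewrite H memv0 (negbTE H1).
split.
- split; split.
  + by rewrite inE C0.
  + move=> x y; rewrite !inE => Hx Hy.
    have [a Ha a0] := nz_elt Hx.
    have [b Hb b0] := nz_elt Hy.
    have [lam /andP [Hf Hl]] := key HF HS Ha Hb a0 b0.
    suff -> : lam_of_dc 0 (x - y) = lam by [].
    apply/ffunP => i; move/forallP: Hf => /(_ i).
    rewrite !ffunE !mxE; exact: coordC.
  + rewrite inE; apply/existsP; exists 0; rewrite C0 Sg0 andbT.
    by apply/forallP => i; rewrite mxE mul0r.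
  + move=> x y; rewrite !inE => /existsP [c1 /andP [_ Hx]] /existsP [c2 /andP [_ Hy]].
    have [a Ha a0] := nz_elt Hx.
    have [b Hb b0] := nz_elt Hy.
    have [lam /andP [Hf Hl]] := key HF HS Ha Hb a0 b0.
    apply/existsP; exists (\row_i (if lam i == IShalf then 1 else 0)).
    apply/andP; split.
      apply/forallP => i; move/forallP: Hf => /(_ i).
      rewrite !lam_dcE !mxE => /coordD [_ ->] //.
    suff -> : lam_of_dc (x - y) (\row_i (if lam i == IShalf then 1 else 0)) = lam by [].
    apply/ffunP => i; move/forallP: Hf => /(_ i).
    by rewrite !lam_dcE !mxE => /coordD [-> _].
- split.
  + move=> a; rewrite inE => /(FA1N HF).
    have -> : NL (lam_of_dc 0 a) = 8 * wt a.
      rewrite wtE /NL mulr_sumr; apply: eq_bigr => i _.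
      by rewrite lam_dcE mxE coordN mulrCA.
    by move=> H; rewrite -(@dvdz_mul2l 8) //; exact: H.
  + move=> d; rewrite inE => /existsP [c /andP [_ Hc]].
    move: (FA1N HF Hc).
    have -> : NL (lam_of_dc d c) =
      wt d + 8 * \sum_i sgn i * ind ((d 0 i != 1) && (c 0 i == 1)).
      rewrite wtE /NL mulr_sumr -big_split; apply: eq_bigr => i _ /=.
      by rewrite lam_dcE coordDN mulrDr mulrCA.
    move=> H16.
    have H8 : (8 %| wt d + 8 * \sum_i sgn i * ind ((d 0 i != 1) && (c 0 i == 1)))%Z.
      by apply: dvdz_trans H16.
    have := rpredB H8 (dvdz_mulr (\sum_i sgn i * ind ((d 0 i != 1) && (c 0 i == 1))) (dvdzz 8)).
    by rewrite addrK.
- move=> a d; rewrite !inE => Ha' /existsP [c /andP [_ Hd']].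
  have [x Hx x0] := nz_elt Ha'.
  have [y Hy y0] := nz_elt Hd'.
  have [lam /andP [Hf Hl]] := key HF HS Hx Hy x0 y0.
  have E : \sum_i sgn i * (v16 (lam i) - v16 (lam_of_dc d c i)
             + v16 (lam_of_dc 0 a i) - 8 * ind (a 0 i * d 0 i == 1))
         = NL lam - NL (lam_of_dc d c) + NL (lam_of_dc 0 a) - 8 * wt (cwmul a d).
    rewrite wtE /NL mulr_sumr -!sumrB -big_split -sumrB; apply: eq_bigr => i _.
    rewrite mxE /=; ring.
  have H16 : (16 %| \sum_i sgn i * (v16 (lam i) - v16 (lam_of_dc d c i)
             + v16 (lam_of_dc 0 a i) - 8 * ind (a 0 i * d 0 i == 1)))%Z.
    apply: rpred_sum => i _; apply: dvdz_mull.
    move/forallP: Hf => /(_ i); rewrite !lam_dcE mxE; exact: coord3.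
  rewrite E in H16.
  have H1 := FA1N HF Hl.
  have H2 := FA1N HF Hd'.
  have H3 := FA1N HF Ha'.
  have H4 := rpredB (rpredD (rpredB H1 H2) H3) H16.
  set X := NL lam - _ + _ in H4.
  have H5 : (16 %| 8 * wt (cwmul a d))%Z.
    by move: H4; rewrite opprB addrC subrK.
  by rewrite -(@dvdz_mul2l 8) //; exact: H5.
Qed.
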